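(* Let $M(\mathbb{1},\lambda,e,V)$ be the generic characteristic matrix of a $\mathbb{Z}^d$-periodic graph specialized at $z=\mathbb{1}=(1,\dots,1)$. Then $\det M(\mathbb{1},\lambda,e,V)$ is cancellation-free.
   Context: A $\mathbb{Z}^d$-periodic graph $\Gamma$ is a simple undirected graph of bounded degree with a free $\mathbb{Z}^d$-action by automorphisms with finitely many vertex and edge orbits; $W$ is a set of vertex-orbit representatives, identified with $[n]$. The generic characteristic matrix is $M(z,\lambda,e,V)=\lambda I_n-H(z,e,V)$, where $H(z,e,V)$ has $(v,u)$ entry $\delta_{v,u}V(v)-\sum_{\alpha\in\mathbb{Z}^d: v\sim\alpha+u}e_{(v,\alpha+u)}z^\alpha$ with independent indeterminates $e$ (one per edge orbit) and $V(v)$ (one per $v\in W$). For an $n\times n$ polynomial matrix $M=(f_{i,j})$, $\det M=\sum_{w\in S_n}\mathrm{sgn}(w)M_w$ with $M_w=\prod_i f_{i,w(i)}$, and $\det M$ is cancellation-free if for every $w$ with $M_w\neq0$ the support (set of monomials, here in $\lambda,e,V$) of $M_w$ is contained in the support of $\det M$. *)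

(* Defs.v *)
From HB Require Import structures.
From mathcomp Require Import all_boot all_order all_algebra all_fingroup.
From mathcomp Require Import mpoly.
Set Implicit Arguments. Unset Strict Implicit. Unset Printing Implicit Defensive.
Import GRing.Theory.
Local Open Scope ring_scope.

(* A Z^d-periodic graph with n vertex orbits and m edge orbits.
   Vertices are pairs (w, x) with w : 'I_n (the orbit representative set W = [n])
   and x : Z^d (row vector 'rV[int]_d); Z^d acts freely by translation of x.
   The m edge orbits are given by representatives E k = (u, v, beta), meaning
   the edge {(u,0), (v,beta)}; the whole orbit is {(u,x),(v,x+beta)}, x in Z^d. *)
Definition edge_rep n d := ('I_n * 'I_n * 'rV[int]_d)%type.

Definition rev_edge n d (t : edge_rep n d) : edge_rep n d :=
  (t.1.2, t.1.1, - t.2).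

(* Well-formedness: distinct k give distinct edge orbits, and no loops
   (the graph is simple). Bounded degree follows from finitely many orbits. *)
Definition periodic_graph_data n d m (E : 'I_m -> edge_rep n d) : Prop :=
  [/\ injective E,
      (forall k, ~ ((E k).1.1 = (E k).1.2 /\ (E k).2 = 0)) &
      (forall k l, E l <> rev_edge (E k))].

Definition padj n d m (E : 'I_m -> edge_rep n d)
  (p q : 'I_n * 'rV[int]_d) : Prop :=
  exists k : 'I_m, (E k = (p.1, q.1, q.2 - p.2)) \/ (E k = (q.1, p.1, p.2 - q.2)).

Definition nvars m n := (m + n).+1.
Definition lam_var m n : {mpoly int[nvars m n]} := 'X_ord0.
Definition e_var m n (k : 'I_m) : {mpoly int[nvars m n]} := 'X_(inord k.+1).
Definition V_var m n (v : 'I_n) : {mpoly int[nvars m n]} := 'X_(inord (m + v).+1).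

(* H(1, e, V)_{v,u} = delta_{v,u} V(v) - sum_{alpha : v ~ alpha + u} e_{(v, alpha+u)}.
   The neighbours (u, alpha) of (v, 0) in edge orbit k are: alpha = beta if
   E k = (v,u,beta), and alpha = -beta if E k = (u,v,beta); when u = v both occur
   (and are distinct since beta <> 0). *)
Definition H1 n d m (E : 'I_m -> edge_rep n d) : 'M[{mpoly int[nvars m n]}]_n :=
  \matrix_(v, u)
    ((v == u)%:R * V_var m v
     - \sum_(k < m) e_var n k *
         ((((E k).1.1 == v) && ((E k).1.2 == u))%:R
          + (((E k).1.1 == u) && ((E k).1.2 == v))%:R)).

Definition charM1 n d m (E : 'I_m -> edge_rep n d) : 'M[{mpoly int[nvars m n]}]_n :=
  lam_var m n *: 1%:M - H1 E.

Definition perm_term k N (A : 'M[{mpoly int[k]}]_N) (w : 'S_N) : {mpoly int[k]} :=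
  \prod_(i < N) A i (w i).

Definition cancellation_free k N (A : 'M[{mpoly int[k]}]_N) : Prop :=
  forall w : 'S_N, perm_term A w != 0 ->
    {subset msupp (perm_term A w) <= msupp (\det A)}.

(* Main.v *)
Require Import Defs.
From mathcomp Require Import all_boot all_order all_algebra all_fingroup.
From mathcomp Require Import mpoly ring.
Set Implicit Arguments. Unset Strict Implicit. Unset Printing Implicit Defensive.
Import Order.TTheory GRing.Theory Num.Theory.
Local Open Scope ring_scope.

Lemma sum_option (T : finType) (R : nmodType) (F : option T -> R) :
  \sum_(t : option T) F t = F None + \sum_(x : T) F (Some x).
Proof.
rewrite (bigD1 None) //=; congr (_ + _).
rewrite (@reindex_omap _ _ _ _ _ Some id) => [|[x|] //].
by apply: eq_bigl => x; rewrite eqxx.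
Qed.

Lemma core_perm n (w w' : 'S_n) :
  (forall j u, j != u -> ((w j == u) + (w u == j) = (w' j == u) + (w' u == j))%N) ->
  odd_perm w = odd_perm w'.
Proof.
move=> H.
have fixE j : (w j == j) = (w' j == j).
  suff imp (a b : 'S_n) : (forall j u, j != u -> ((a j == u) + (a u == j) = (b j == u) + (b u == j))%N) ->
      a j == j -> b j == j.
    apply/idP/idP; first exact: imp.
    apply: imp => x y /H ->. done.
  move=> Hab /eqP aj; case: (eqVneq (b j) j) => // bj.
  have := Hab j (b j); rewrite eq_sym => /(_ bj).
  have abj : (a (b j) == j) = false by rewrite -{2}aj (inj_eq perm_inj) (negbTE bj).
  by rewrite aj eq_sym (negbTE bj) eqxx abj.
pose R := [pred i | w' i != w i].
have Rinv i : R i -> w (w' i) = i.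
  rewrite /R /= => ne.
  have ni : w' i != i.
    apply/negP => /eqP e; move: (e) => /eqP; rewrite -fixE => /eqP e'.
    by move: ne; rewrite e e' eqxx.
  have := H i (w' i); rewrite eq_sym ni eqxx /= => /(_ isT).
  by rewrite eq_sym (negbTE ne) /= add0n; case: eqP => // _; case: (w' (w' i) == i).
have Rcl i : R i -> R (w i).
  rewrite /R /= => ne; apply/negP => /eqP e.
  have ni : w i != i.
    apply/negP => /eqP e'; move: (e') => /eqP; rewrite fixE => /eqP e''.
    by move: ne; rewrite e' e'' eqxx.
  have := H i (w i); rewrite eq_sym ni => /(_ isT).
  by rewrite eqxx e (negbTE ne) => /eqP; rewrite eqn_add2r.
have rho_inj : injective (fun i => if R i then w i else i).
  move=> x y; cbv beta; case Rx: (R x); case Ry: (R y).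
  - exact: (@perm_inj _ w).
  - by move=> e; move: (Rcl x Rx); rewrite e Ry.
  - by move=> e; move: (Rcl y Ry); rewrite -e Rx.
  - by [].
pose rho := perm rho_inj.
have E : w = (rho * rho * w')%g.
  apply/permP => x; rewrite !permM !permE /=.
  case Rx: (w' x != w x); last by rewrite /= Rx; move/negbFE/eqP: Rx.
  have Rwx : w' (w x) != w (w x) := Rcl _ Rx.
  rewrite Rwx.
  have Rwwx : w' (w (w x)) != w (w (w x)) := Rcl _ Rwx.
  by apply: (@perm_inj _ w); rewrite (Rinv _ Rwwx).
by rewrite E !odd_permM addbb.
Qed.

Section S.
Variables (n d m : nat) (E : 'I_m -> edge_rep n d).

Definition cE k (v u : 'I_n) : int :=
  (((E k).1.1 == v) && ((E k).1.2 == u))%:R + (((E k).1.1 == u) && ((E k).1.2 == v))%:R.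
Definition coefT (v u : 'I_n) (t : option (option 'I_m)) : int :=
  match t with None => (v == u)%:R | Some None => - (v == u)%:R | Some (Some k) => cE k v u end.
Definition varT (v : 'I_n) (t : option (option 'I_m)) : 'I_(nvars m n) :=
  match t with None => ord0 | Some None => inord (m + v).+1 | Some (Some k) => inord k.+1 end.

Lemma entryE v u : charM1 E v u = \sum_t coefT v u t *: 'X_(varT v t).
Proof.
rewrite sum_option sum_option /charM1 /H1 !mxE /=.
have eS : \sum_(k < m) e_var n k *
    ((((E k).1.1 == v) && ((E k).1.2 == u))%:R +
     (((E k).1.1 == u) && ((E k).1.2 == v))%:R) =
  \sum_(x < m) cE x v u *: 'X_(inord x.+1) :> {mpoly int[nvars m n]}.
  apply: eq_bigr => k _; rewrite /cE /e_var scalerDl !scaler_nat mulrDr !mulr_natr.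
  done.
rewrite eS scaleNr scaler_nat /lam_var /V_var mulr_natr -scaler_nat.
rewrite mulr_natl -scaler_nat; congr (_ + _); by rewrite opprB addrC.
Qed.

Definition mon (f : {ffun 'I_n -> option (option 'I_m)}) : 'X_{1..nvars m n} :=
  (\sum_i U_(varT i (f i)))%MM.
Definition Pw (w : 'S_n) (f : {ffun 'I_n -> option (option 'I_m)}) : int :=
  \prod_i coefT i (w i) (f i).

Lemma prodZX (I : finType) (c : I -> int) (x : I -> 'I_(nvars m n)) :
  \prod_i (c i *: 'X_(x i)) = (\prod_i c i) *: 'X_[(\sum_i U_(x i))%MM] :> {mpoly int[nvars m n]}.
Proof.
under eq_bigr do rewrite -mul_mpolyC.
rewrite big_split /= -rmorph_prod mul_mpolyC.
congr (_ *: _).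
by rewrite (big_morph (fun mm => 'X_[mm] : {mpoly int[nvars m n]}) (@mpolyXD _ _) (@mpolyX0 _ _)).
Qed.

Lemma permtermE w : perm_term (charM1 E) w = \sum_f Pw w f *: 'X_[mon f].
Proof.
rewrite /perm_term; under eq_bigr do rewrite entryE.
rewrite bigA_distr_bigA; apply: eq_bigr => f _.
by rewrite prodZX.
Qed.

Lemma mcoeff_perm w mm : (perm_term (charM1 E) w)@_mm = \sum_f Pw w f * (mon f == mm)%:R.
Proof.
rewrite permtermE raddf_sum; apply: eq_bigr => f _.
by rewrite /= mcoeffZ mcoeffX.
Qed.

Lemma mcoeff_det mm : (\det (charM1 E))@_mm = \sum_(w : 'S_n) (-1) ^+ w * (perm_term (charM1 E) w)@_mm.
Proof.
rewrite /determinant raddf_sum; apply: eq_bigr => w _.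
by rewrite /= /perm_term; case: (odd_perm w); rewrite ?expr1 ?expr0 ?mulN1r ?mul1r ?mcoeffN.
Qed.

Definition vT (v : 'I_n) (t : option (option 'I_m)) : nat :=
  match t with None => 0 | Some None => (m + v).+1 | Some (Some k) => k.+1 end.

Lemma varT_val v t : val (varT v t) = vT v t.
Proof.
case: t => [[k|]|] //=; rewrite inordK //.
- by rewrite ltnS ltn_addr.
- by rewrite ltnS ltn_add2l.
Qed.

Lemma monE f x : mon f x = (\sum_i (vT i (f i) == nat_of_ord x))%N.
Proof.
rewrite /mon mnm_sumE; apply: eq_bigr => i _.
by rewrite mnm1E -val_eqE varT_val.
Qed.

Lemma monV f (j : 'I_n) : mon f (inord (m + j).+1) = (f j == Some None).
Proof.
rewrite monE inordK; last by rewrite ltnS ltn_add2l.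
rewrite (bigD1 j) //= big1 => [|i ij].
  rewrite addn0; case: (f j) => [[k|]|] //=.
    by rewrite eqSS ltn_eqF // ltn_addr.
  by rewrite eqxx.
case: (f i) => [[k|]|] //=.
  by rewrite eqSS ltn_eqF // ltn_addr.
by rewrite eqSS eqn_add2l (inj_eq val_inj) (negbTE ij).
Qed.

Definition endb k (j u : 'I_n) :=
  ((E k).1.1 == j) && ((E k).1.2 == u) || ((E k).1.1 == u) && ((E k).1.2 == j).

Definition gcnt (f : {ffun 'I_n -> option (option 'I_m)}) j u :=
  (\sum_i (match f i with Some (Some k) => endb k j u | _ => false end : nat))%N.

Lemma gcntE f j u : gcnt f j u = (\sum_(k < m | endb k j u) mon f (inord k.+1))%N.
Proof.
under [RHS]eq_bigr do rewrite monE inordK ?ltnS ?ltn_addr //.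
rewrite exchange_big /=; apply: eq_bigr => i _.
case: (f i) => [[k0|]|] /=.
- rewrite big_mkcond (bigD1 k0) //= eqxx big1 => [|k kk0].
    by case: (endb k0 j u).
  by rewrite eqSS (inj_eq val_inj) eq_sym (negbTE kk0); case: (endb k j u).
- rewrite big1 // => k _; apply/eqP; rewrite eqb0 eqSS; apply/negP => /eqP e.
  by move: (ltn_ord k); rewrite -e ltnNge leq_addr.
- by rewrite big1.
Qed.

Lemma pair_count (T : eqType) (i wi j u : T) : j != u ->
  ((i == j) && (wi == u) || (i == u) && (wi == j) : nat) =
  (((i == j) && (wi == u)) + ((i == u) && (wi == j)))%N.
Proof.
move=> ju; case: (i =P j) => [eij|_]; case: (i =P u) => [eiu|_] //=.
- by move: ju; rewrite -eij -eiu eqxx.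
- by rewrite orbF addn0.
Qed.

Lemma gcnt_perm (w : 'S_n) f j u : Pw w f != 0 -> j != u ->
  gcnt f j u = ((w j == u) + (w u == j))%N.
Proof.
move=> /prodf_neq0 Hp ju.
have -> : ((w j == u) + (w u == j) =
   \sum_i (((i == j) && (w i == u)) + ((i == u) && (w i == j))))%N.
  rewrite big_split /= (bigD1 j) //= eqxx big1 => [|i /negbTE -> //].
  rewrite (bigD1 u) //= eqxx big1 => [|i /negbTE -> //].
  by rewrite !addn0.
apply: eq_bigr => i _; rewrite -pair_count //.
have := Hp i isT; rewrite /coefT.
case: (f i) => [[k|]|] /=.
- rewrite /cE /endb; move: (E k).1.1 (E k).1.2 => a b.
  move=> H; have : (a == i) && (b == w i) || (a == w i) && (b == i).
    by move: H; case: (_ && _); case: (_ && _).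
  case/orP => /andP[/eqP -> /eqP ->] //.
  by case: (i == j); case: (w i == u); case: (w i == j); case: (i == u).
- move=> H; have ewi : w i = i.
    by apply/esym/eqP; move: H; case: (i == w i) => //=; rewrite ?oppr0 eqxx.
  rewrite ewi [X in _ || X]andbC orbb; case: (i =P j) => [eij|//].
  by case: (i =P u) => // eiu; move: ju; rewrite -eij -eiu eqxx.
- move=> H; have ewi : w i = i.
    by apply/esym/eqP; move: H; case: (i == w i) => //=; rewrite ?oppr0 eqxx.
  rewrite ewi [X in _ || X]andbC orbb; case: (i =P j) => [eij|//].
  by case: (i =P u) => // eiu; move: ju; rewrite -eij -eiu eqxx.
Qed.

Definition sig (f : {ffun 'I_n -> option (option 'I_m)}) : int :=
  \prod_i (if f i == Some None then -1 else 1).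

Lemma sig_P_ge0 w f : 0 <= sig f * Pw w f.
Proof.
rewrite /sig /Pw -big_split /=; apply: prodr_ge0 => i _.
case: (f i) => [[k|]|] /=.
- by rewrite mul1r /cE addr_ge0 // ler0n.
- by rewrite mulN1r opprK ler0n.
- by rewrite mul1r ler0n.
Qed.

Lemma sig_sq f : sig f * sig f = 1.
Proof.
rewrite /sig -big_split big1 // => i _ /=.
by case: ifP; rewrite ?mulN1r ?opprK ?mulr1.
Qed.
End S.

Lemma sum_ge_term (I : finType) (F : I -> int) i0 :
  (forall i, 0 <= F i) -> F i0 <= \sum_i F i.
Proof.
by move=> H; rewrite (bigD1 i0) //= lerDl sumr_ge0.
Qed.

Theorem corollary2p4 (n d m : nat) (E : 'I_m -> edge_rep n d) :
  periodic_graph_data E -> cancellation_free (charM1 E).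
Proof.
move=> _ w0 _ mm; rewrite !mcoeff_msupp mcoeff_perm mcoeff_det => Hne.
have [f0 Hf0] : exists f, Pw E w0 f * (mon f == mm)%:R != 0.
  apply/existsP; apply: contraR Hne => /existsPn H; rewrite big1 // => f _.
  by move: (H f); rewrite negbK => /eqP.
have Pf0 : Pw E w0 f0 != 0 by move: Hf0; rewrite mulf_eq0 negb_or => /andP[].
have mf0 : mon f0 = mm.
  by case: (eqVneq (mon f0) mm) => // ne; move: Hf0; rewrite (negbTE ne) mulr0 eqxx.
set x0 := (-1) ^+ w0 * Pw E w0 f0.
have x0ne : x0 != 0 by rewrite mulf_neq0 // signr_eq0.
have key (w : 'S_n) f : 0 <= x0 * ((-1) ^+ w * (Pw E w f * (mon f == mm)%:R)).
  case: (eqVneq (mon f) mm) => [mf|_]; last by rewrite !mulr0.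
  case: (eqVneq (Pw E w f) 0) => [->|Pf]; first by rewrite !(mul0r, mulr0).
  rewrite mulr1.
  have sg : sig f = sig f0.
    rewrite /sig; apply: eq_bigr => i _; have := monV f i; have := monV f0 i.
    by rewrite mf mf0 => ->; case: (f i == _); case: (f0 i == _).
  have od : odd_perm w = odd_perm w0.
    apply: core_perm => j u ju.
    rewrite -(gcnt_perm Pf ju) -(gcnt_perm Pf0 ju) !gcntE.
    by apply: eq_bigr => k _; rewrite mf mf0.
  rewrite /x0 od.
  have gen (a b c e : int) : b * b = 1 -> (a * c) * (a * e) = (a * a) * ((b * c) * (b * e)).
    move=> bb; have -> : (a * c) * (a * e) = (a * a) * ((b * b) * (c * e)).
      by rewrite bb mul1r; ring.
    by ring.
  rewrite (gen _ _ _ _ (sig_sq f0)).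
  rewrite -expr2 sqrr_sign mul1r; apply: mulr_ge0; first exact: sig_P_ge0.
  by rewrite -sg; exact: sig_P_ge0.
have : 0 < x0 * \sum_(w : 'S_n) (-1) ^+ w * \sum_f Pw E w f * (mon f == mm)%:R.
  rewrite mulr_sumr.
  under eq_bigr do rewrite mulr_sumr mulr_sumr.
  apply: (@lt_le_trans _ _ (x0 * x0)).
    by rewrite lt0r mulf_neq0 //= -expr2 sqr_ge0.
  apply: le_trans (sum_ge_term w0 _); last first.
    by move=> w; apply: sumr_ge0 => f _; exact: key.
  apply: le_trans (sum_ge_term f0 _); last by move=> f; exact: key.
  by rewrite mf0 eqxx mulr1.
move=> Hpos.
suff eqS : (\sum_(w : 'S_n) (-1) ^+ w * (perm_term (charM1 E) w)@_mm) =
    \sum_(w : 'S_n) (-1) ^+ w * \sum_f Pw E w f * (mon f == mm)%:R.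
  by rewrite eqS; apply: contraTneq Hpos => ->; rewrite mulr0 ltxx.
by apply: eq_bigr => w _; rewrite mcoeff_perm.
Qed.
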